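(* Let $q$ be a prime power, let $m>a\geq0$, $n>b\geq0$, $h\geq0$ be integers with $h\leq (m-a)(n-b)-\max\{m-a,n-b\}$, and let $N=mn$. If $\mathcal{C}_{\mathsf{out}}$ is an $[N,k]$ code over $\mathbb{F}_q$ with $\mathcal{C}_{\mathsf{out}}\in\mathbb{C}^{\mathsf{MR}}_{m\times n}(a,b,0)$, then there exists an $[N,k-h]$ code $\mathcal{C}$ over $\mathbb{F}_{q^{k}}$ with $\mathcal{C}\in\mathbb{C}^{\mathsf{MR}}_{m\times n}(a,b,h)$.
   Context: Positions of vectors in $\mathbb{F}^{mn}$ are identified with the grid $[m]\times[n]$, where $[k]=\{1,\dots,k\}$. For linear codes $\mathcal{C}_1\subseteq\mathbb{F}^m$, $\mathcal{C}_2\subseteq\mathbb{F}^n$ with generator matrices $\mathbf{G}_1,\mathbf{G}_2$, $\mathcal{C}_1\otimes\mathcal{C}_2$ is the row span of $\mathbf{G}_1\otimes\mathbf{G}_2$. A code for the topology $T_{m\times n}(a,b,h)$ is a linear code over a finite field $\mathbb{F}$ with a parity-check matrix $\begin{pmatrix}\mathbf{H}_{\mathsf{local}}\\ \mathbf{H}_{\mathsf{global}}\end{pmatrix}$, where $\mathbf{H}_{\mathsf{local}}$ is a parity-check matrix of $\mathcal{C}_{\mathsf{col}}\otimes\mathcal{C}_{\mathsf{row}}$ for some linear $[m,\geq m-a]$ code $\mathcal{C}_{\mathsf{col}}$ and $[n,\geq n-b]$ code $\mathcal{C}_{\mathsf{row}}$ over $\mathbb{F}$, and $\mathbf{H}_{\mathsf{global}}$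 is an arbitrary $h\times mn$ matrix; $\mathbb{C}_{m\times n}(a,b,h)$ is the set of all such codes (over any finite field). A code corrects an erasure pattern $\mathcal{E}\subseteq[m]\times[n]$ if no two distinct codewords agree on all positions outside $\mathcal{E}$. $\mathcal{E}$ is correctable in $T_{m\times n}(a,b,h)$ if some code in $\mathbb{C}_{m\times n}(a,b,h)$ corrects it; $\mathbb{E}_{m\times n}(a,b,h)$ is the set of such patterns. A code in $\mathbb{C}_{m\times n}(a,b,h)$ is maximally recoverable (MR) if it corrects every pattern in $\mathbb{E}_{m\times n}(a,b,h)$; $\mathbb{C}^{\mathsf{MR}}_{m\times n}(a,b,h)$ is the set of MR codes. *)

(* Defs.v *)
From HB Require Import structures.
From mathcomp Require Import all_boot all_order all_algebra all_field.
From mathcomp Require Import mxtens.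
Set Implicit Arguments. Unset Strict Implicit. Unset Printing Implicit Defensive.
Import GRing.Theory.
Local Open Scope ring_scope.

(* Conventions.
   - A linear code of length N over a field F is the row space of a matrix
     C : 'M[F]_N (any spanning set of rows); its dimension is \rank C.
   - Vectors of F^(m*n) are row vectors 'rV[F]_(m*n); the grid position
     (i,j) in [m]x[n] is the coordinate mxtens_index (i,j) (= i*n + j),
     which is the indexing used by the Kronecker product tensmx (A *t B). *)

Definition pc_code (F : fieldType) (r N : nat) (H : 'M[F]_(r, N)) : 'M[F]_N :=
  kermx H^T.

Definition tens_code (F : fieldType) (m n : nat) (Gcol : 'M[F]_m) (Grow : 'M[F]_n)
  : 'M[F]_(m * n) := Gcol *t Grow.

Definition in_topology (F : fieldType) (m n a b h : nat) (C : 'M[F]_(m * n)) : Prop :=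
  exists (Gcol : 'M[F]_m) (Grow : 'M[F]_n),
    [/\ (m - a <= \rank Gcol)%N, (n - b <= \rank Grow)%N &
    exists (r : nat) (Hloc : 'M[F]_(r, m * n)) (Hglob : 'M[F]_(h, m * n)),
      (pc_code Hloc == tens_code Gcol Grow)%MS /\
      (C == pc_code (col_mx Hloc Hglob))%MS].

Definition corrects (F : fieldType) (m n : nat) (C : 'M[F]_(m * n))
  (E : {set 'I_m * 'I_n}) : Prop :=
  forall x y : 'rV[F]_(m * n), (x <= C)%MS -> (y <= C)%MS ->
    (forall ij, ij \notin E -> x 0 (mxtens_index ij) = y 0 (mxtens_index ij)) ->
    x = y.

Definition correctable (m n a b h : nat) (E : {set 'I_m * 'I_n}) : Prop :=
  exists (F : finFieldType) (C : 'M[F]_(m * n)),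
    in_topology a b h C /\ corrects C E.

Definition is_MR (F : fieldType) (m n a b h : nat) (C : 'M[F]_(m * n)) : Prop :=
  in_topology a b h C /\
  forall E : {set 'I_m * 'I_n}, correctable a b h E -> corrects C E.

(* Main.v *)
Require Import Defs.
From HB Require Import structures.
From mathcomp Require Import all_boot all_order all_algebra all_field.
From mathcomp Require Import mxtens.
Set Implicit Arguments. Unset Strict Implicit. Unset Printing Implicit Defensive.
Import GRing.Theory.
Local Open Scope ring_scope.
Lemma ext_field (F : finFieldType) k : (0 < k)%N ->
  {L0 : splittingFieldType F | #|FinFieldExtType L0| = (#|F| ^ k)%N}.
Proof.
move=> k_gt0.
have [p pr_p pcharFp] := finPcharP F.
have cardF := card_pprimeChar pcharFp.
set e := logn p #|F| in cardF.
have e_gt0 : (0 < e)%N.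
  case: (posnP e) => // e0; have := finNzRing_gt1 F.
  by rewrite cardF e0.
pose m := (p ^ (e * k))%N.
have Dm : m = (#|F| ^ k)%N by rewrite cardF -expnM.
rewrite -Dm.
have m_gt1: (m > 1)%N by rewrite (ltn_exp2l 0) ?prime_gt1 // muln_gt0 e_gt0.
have m_gt0 := ltnW m_gt1; have m1_gt0: (m.-1 > 0)%N by rewrite -ltnS prednK.
pose q (R : nzRingType) : {poly R} := 'X^m - 'X.
have Dq R: q R = ('X^(m.-1) - 1) * ('X - 0).
  by rewrite subr0 mulrBl mul1r -exprSr prednK.
have /FinSplittingFieldFor[/= L splitLq]: q F != 0.
  by rewrite Dq monic_neq0 ?rpredM ?monicXsubC ?monicXnsubC.
rewrite rmorphB rmorphXn /= map_polyX -/(q L) in splitLq.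
have pcharL: p \in [pchar L] by rewrite pchar_lalg.
pose Fm := FinFieldExtType L; exists L => //.
have /finField_galois_generator[/= a _ Da]: (1 <= {:L})%VS by apply: sub1v.
pose Em := fixedSpace (a ^+ k)%g; rewrite dimv1 expn1 in Da.
have{splitLq} [zs DqL defL] := splitLq.
have Uzs: uniq zs.
  rewrite -separable_prod_XsubC -(eqp_separable DqL) Dq separable_root andbC.
  rewrite /root !hornerE subr_eq0 eq_sym expr0n gtn_eqF ?oner_eq0 //=.
  rewrite cyclotomic.separable_Xn_sub_1 // -subn1 natrB // subr_eq0.
  by rewrite natrX pcharf0 // expr0n gtn_eqF ?muln_gt0 ?e_gt0 // eq_sym oner_eq0.
suffices /eq_card->: Fm =i zs.
  apply: succn_inj; rewrite (card_uniqP _) //= -(size_prod_XsubC _ id).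
  by rewrite -(eqp_size DqL) size_polyDl size_polyXn // size_polyN size_polyX.
have in_zs: zs =i Em.
  move=> z; rewrite -root_prod_XsubC -(eqp_root DqL) (sameP fixedSpaceP eqP).
  rewrite /root !hornerE subr_eq0 /= /m; congr (_ == z).
  rewrite expnM -cardF.
  elim: (k) => [|i IHi]; first by rewrite gal_id.
  by rewrite expgSr expnSr exprM IHi galM ?Da ?memvf.
suffices defEm: Em = {:L}%VS by move=> z; rewrite in_zs defEm memvf.
apply/eqP; rewrite eqEsubv subvf -defL -[Em]subfield_closed agenvS //.
by rewrite subv_add sub1v; apply/span_subvP=> z; rewrite in_zs.
Qed.

Definition Findep (F : finFieldType) (L : fieldType) (phi : {rmorphism F -> L})
  t (beta : 'I_t -> L) :=
  forall d : 'I_t -> F, \sum_l phi (d l) * beta l = 0 -> forall l, d l = 0.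

Lemma ext_field2 (F : finFieldType) k : (0 < k)%N ->
  exists (L : finFieldType) (phi : {rmorphism F -> L}) (alpha : 'I_k -> L),
  [/\ #|L| = (#|F| ^ k)%N, Findep phi alpha &
      forall x y : L, (x + y) ^+ #|F| = x ^+ #|F| + y ^+ #|F|].
Proof.
move=> k_gt0; have [L0 cardL] := ext_field F k_gt0.
pose L := FinFieldExtType L0.
have dimL : \dim {:L0} = k.
  have := card_vspace (fullv : {vspace finvect_type L0}).
  rewrite card_vspacef.
  have -> : #|finvect_type L0| = #|L| by [].
  rewrite cardL => /eqP; rewrite eqn_exp2l ?finNzRing_gt1 //.
  by move/eqP.
pose phi : {rmorphism F -> L} := in_alg L0.
pose X := vbasis (fullv : {vspace L0}).
exists L, phi, (fun j => X`_j); split => //.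
- have : free X by exact: basis_free (vbasisP _).
  move/freeP => fr; move: (dimL) => dL; subst k => d Hs l.
  apply: fr l; apply: etrans Hs; apply: eq_bigr => i _.
  by rewrite /phi /= mulr_algl.
- have [p pr_p pcharFp] := finPcharP F.
  have pcharL: p \in [pchar L] by rewrite (rmorph_pchar phi).
  move=> x y; apply: exprDn_pchar.
  by rewrite (card_pprimeChar pcharFp) pnatX (pnatE _ pr_p) pcharL.
Qed.
Section Moore.
Variables (F : finFieldType) (L : fieldType) (phi : {rmorphism F -> L}).
Local Notation q := #|F|.
Hypothesis frobD : forall x y : L, (x + y) ^+ q = x ^+ q + y ^+ q.

Lemma q_gt1 : (1 < q)%N. Proof. exact: finNzRing_gt1. Qed.

Lemma frobDi i (x y : L) : (x + y) ^+ (q ^ i) = x ^+ (q ^ i) + y ^+ (q ^ i).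
Proof. by elim: i => [|i IH]; rewrite ?expr1 // expnSr !exprM IH frobD. Qed.

Lemma frob0i i : (0 : L) ^+ (q ^ i) = 0.
Proof. by rewrite expr0n expn_eq0 (gtn_eqF (ltnW q_gt1)). Qed.

Lemma frob_sumi i I (r : seq I) (P : pred I) (G : I -> L) :
  (\sum_(j <- r | P j) G j) ^+ (q ^ i) = \sum_(j <- r | P j) G j ^+ (q ^ i).
Proof.
apply: (big_ind2 (fun a b => a ^+ (q ^ i) = b)) => //.
  exact: frob0i.
by move=> a b c d <- <-; rewrite frobDi.
Qed.

Lemma frob_phi i (c : F) : phi c ^+ (q ^ i) = phi c.
Proof.
elim: i => [|i IH]; first by rewrite expr1.
by rewrite expnSr exprM IH -rmorphXn expf_card.
Qed.

Lemma frob_lin i t (d : 'I_t -> F) (beta : 'I_t -> L) :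
  (\sum_l phi (d l) * beta l) ^+ (q ^ i) = \sum_l phi (d l) * beta l ^+ (q ^ i).
Proof. by rewrite frob_sumi; apply: eq_bigr => l _; rewrite exprMn frob_phi. Qed.

Definition moore s t (beta : 'I_t -> L) : 'M[L]_(s, t) :=
  \matrix_(i, l) beta l ^+ (q ^ i).

Lemma moore_free s t (beta : 'I_t -> L) :
  (s <= t)%N -> Findep phi beta -> row_free (moore s beta).
Proof.
move=> st ind; apply: inj_row_free => c Hc.
case: s st c Hc => [|s] st c Hc; first by apply/matrixP => i [].
apply/eqP/negPn/negP => cn0.
pose P : {poly L} := \sum_(i < s.+1) c 0 i *: 'X^(q ^ i).
have coefP (i : 'I_s.+1) : P`_(q ^ i) = c 0 i.
  rewrite /P coef_sum (bigD1 i) //= coefZ coefXn eqxx mulr1 big1 ?addr0 //.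
  move=> j ji; rewrite coefZ coefXn eqn_exp2l ?q_gt1 //.
  by case: eqP => [/val_inj e|_]; [rewrite e eqxx in ji | rewrite mulr0].
have Pn0 : P != 0.
  apply: contra cn0 => /eqP P0; apply/eqP/matrixP => i j.
  by rewrite ord1 -coefP P0 coef0 mxE.
pose g (d : {ffun 'I_t -> F}) := \sum_l phi (d l) * beta l.
pose rs := map g (enum {ffun 'I_t -> F}).
have ginj : injective g.
  move=> d1 d2 /eqP; rewrite -subr_eq0 -sumrB => /eqP H.
  apply/ffunP => l; apply/eqP; rewrite -subr_eq0; apply/eqP.
  apply: (ind (fun l => d1 l - d2 l)) => //.
  by apply: (etrans _ H); apply: eq_bigr => j _; rewrite rmorphB mulrBl.
have Urs : uniq rs by rewrite map_inj_uniq ?enum_uniq.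
have rootP : all (root P) rs.
  apply/allP => x /mapP [d _ ->]; rewrite /root /P horner_sum.
  have -> : \sum_(i < s.+1) (c 0 i *: 'X^(q ^ i)).[g d] =
     \sum_(i < s.+1) \sum_l c 0 i * (phi (d l) * beta l ^+ (q ^ i)).
    apply: eq_bigr => i _; rewrite hornerZ hornerXn /g frob_lin.
    by rewrite mulr_sumr.
  rewrite exchange_big big1 //= => l _.
  transitivity (phi (d l) * (c *m moore s.+1 beta) 0 l); last by rewrite Hc mxE mulr0.
  by rewrite !mxE mulr_sumr; apply: eq_bigr => i _; rewrite !mxE mulrCA.
have := max_poly_roots Pn0 rootP Urs.
rewrite size_map -cardE card_ffun card_ord.
have szP : (size P <= (q ^ s).+1)%N.
  apply: leq_trans (size_sum _ _ _) _; apply/bigmax_leqP => i _.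
  apply: leq_trans (size_scale_leq _ _) _; rewrite size_polyXn ltnS.
  by rewrite leq_exp2l ?q_gt1 // -ltnS.
move=> H; have := leq_trans H szP; rewrite ltnS leq_exp2l ?q_gt1 //.
by rewrite leqNgt st.
Qed.

Lemma moore_tfree h t (beta : 'I_t -> L) :
  (t <= h)%N -> Findep phi beta -> row_free (moore h beta)^T.
Proof.
move=> th ind; rewrite /row_free mxrank_tr eqn_leq rank_leq_col /=.
pose B : 'M[L]_(t, h) := \matrix_(i, j) (i == j :> nat)%:R.
have E : B *m moore h beta = moore t beta.
  apply/matrixP => i l; rewrite !mxE.
  rewrite (bigD1 (widen_ord th i)) //= !mxE eqxx mul1r big1 ?addr0 //.
  move=> j ji; rewrite mxE.
  case: eqP => [e|_]; last by rewrite mul0r.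
  by case/eqP: ji; apply/val_inj.
rewrite -[X in (X <= _)%N](eqP (moore_free (leqnn t) ind)) -E.
exact: mxrankM_maxr.
Qed.

End Moore.
Lemma eqmx_rows (K : fieldType) p1 p2 N (A : 'M[K]_(p1, N)) (B : 'M_(p2, N)) :
  (forall x : 'rV_N, (x <= A)%MS = (x <= B)%MS) -> (A == B)%MS.
Proof.
move=> H; apply/andP; split; apply/row_subP => i; [rewrite -H | rewrite H];
  exact: row_sub.
Qed.

Lemma rank0_of (K : fieldType) p N (A : 'M[K]_(p, N)) :
  (forall x : 'rV_N, (x <= A)%MS -> x = 0) -> \rank A = 0%N.
Proof.
move=> H; apply/eqP; rewrite mxrank_eq0; apply/eqP/row_matrixP => i.
by rewrite row0; apply: H; exact: row_sub.
Qed.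

Lemma sub_rank0 (K : fieldType) p N (A : 'M[K]_(p, N)) (x : 'rV_N) :
  \rank A = 0%N -> (x <= A)%MS -> x = 0.
Proof.
by move/eqP; rewrite mxrank_eq0 => /eqP ->; move/submx0null.
Qed.

Lemma pc_codeP (K : fieldType) r N (H : 'M[K]_(r, N)) (x : 'rV_N) :
  (x <= pc_code H)%MS = (x *m H^T == 0).
Proof. by rewrite /pc_code sub_kermx. Qed.

Lemma pc_colP (K : fieldType) r1 r2 N (H1 : 'M[K]_(r1, N)) (H2 : 'M_(r2, N))
  (x : 'rV_N) :
  (x <= pc_code (col_mx H1 H2))%MS = (x *m H1^T == 0) && (x *m H2^T == 0).
Proof. by rewrite pc_codeP tr_col_mx mul_mx_row row_mx_eq0. Qed.

Definition Sel (K : fieldType) N t (g : 'I_t -> 'I_N) : 'M[K]_(N, t) :=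
  \matrix_(j, l) (if j == g l then 1 else 0).

Lemma SelE (K : fieldType) N t (g : 'I_t -> 'I_N) (x : 'rV[K]_N) l :
  (x *m Sel K g) 0 l = x 0 (g l).
Proof.
rewrite !mxE (bigD1 (g l)) //= mxE eqxx mulr1 big1 ?addr0 // => j jn.
by rewrite mxE (negbTE jn) mulr0.
Qed.

Lemma Sel_tr (K : fieldType) p N t (g : 'I_t -> 'I_N) (A : 'M[K]_(p, N)) :
  A *m Sel K g = (rowsub g A^T)^T.
Proof.
apply/matrixP => i l; rewrite !mxE (bigD1 (g l)) //= mxE eqxx mulr1.
rewrite big1 ?addr0 // => j jn.
by rewrite mxE (negbTE jn) mulr0.
Qed.

Section Supp.
Variables (m n : nat).
Local Notation N := (m * n)%N.

Definition Zmx (K : fieldType) (E : {set 'I_m * 'I_n}) : 'M[K]_N :=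
  \matrix_(i, j) (if (i == j) && (mxtens_unindex j \notin E) then 1 else 0).

Definition suppE (K : fieldType) (x : 'rV[K]_N) (E : {set 'I_m * 'I_n}) :=
  forall ij, ij \notin E -> x 0 (mxtens_index ij) = 0.

Lemma ZmxE (K : fieldType) (x : 'rV[K]_N) E j :
  (x *m Zmx K E) 0 j = if mxtens_unindex j \notin E then x 0 j else 0.
Proof.
rewrite !mxE (bigD1 j) //= mxE eqxx /= big1 ?addr0.
  by case: ifP; rewrite ?mulr1 ?mulr0.
by move=> l lj; rewrite mxE (negbTE lj) mulr0.
Qed.

Lemma suppZ (K : fieldType) (x : 'rV[K]_N) E : suppE x E <-> x *m Zmx K E = 0.
Proof.
split => [H | H].
  apply/matrixP => i j; rewrite ord1 ZmxE mxE.
  case: ifP => // jE; by rewrite -(mxtens_unindexK j) H.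
move=> ij ijE; have := congr1 (fun M : 'rV[K]_N => M 0 (mxtens_index ij)) H.
by rewrite /= ZmxE mxtens_indexK ijE mxE.
Qed.

Lemma corrects_iff (K : fieldType) (C : 'M[K]_N) E :
  corrects C E <-> forall x : 'rV_N, (x <= C)%MS -> x *m Zmx K E = 0 -> x = 0.
Proof.
split => [H x xC xZ | H x y xC yC xy].
  apply: H xC (sub0mx _ _) _ => ij ijE.
  by rewrite (proj2 (suppZ x E) xZ) // mxE.
apply/eqP; rewrite -subr_eq0; apply/eqP; apply: H.
  by apply: addmx_sub xC _; rewrite eqmx_opp.
by apply/suppZ => ij ijE; rewrite !mxE xy // subrr.
Qed.

Lemma topo0 (K : fieldType) a b (C : 'M[K]_N) :
  in_topology a b 0 C ->
  exists (Gc : 'M[K]_m) (Gr : 'M[K]_n),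
    [/\ (m - a <= \rank Gc)%N, (n - b <= \rank Gr)%N & (C :=: Gc *t Gr)%MS].
Proof.
case=> Gc [Gr [ra rb [r [Hl [Hg [e1 e2]]]]]]; exists Gc, Gr; split => //.
apply/eqmxP; apply: eqmx_rows => x.
rewrite (eqmxP e2) pc_colP thinmx0 eqxx andbT -pc_codeP.
by rewrite (eqmxP e1).
Qed.

Lemma keyB (F : fieldType) a b h (Cout : 'M[F]_N) E :
  is_MR a b 0 Cout -> correctable a b h E ->
  (\rank (Cout :&: kermx (Zmx F E)) <= h)%N.
Proof.
case=> _ MR [F' [C' [[Gc [Gr [ra rb [r [Hl [Hg [e1 e2]]]]]]] corr]]].
set T := tens_code Gc Gr.
set V' := (T :&: kermx (Zmx F' E))%MS.
have memC' (x : 'rV_N) : (x <= C')%MS = (x <= T)%MS && (x *m Hg^T == 0).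
  by rewrite (eqmxP e2) pc_colP -pc_codeP (eqmxP e1).
have rV' : (\rank V' <= h)%N.
  rewrite -(mxrank_mul_ker V' Hg^T).
  have -> : \rank (V' :&: kermx Hg^T) = 0%N.
    apply: rank0_of => x; rewrite !sub_capmx !sub_kermx.
    case/andP => /andP[xT /eqP xZ] xH.
    by apply: (proj1 (corrects_iff C' E) corr x) => //; rewrite memC' xT.
  by rewrite addn0 rank_leq_col.
pose f := maxrankfun V'^T.
have rVS : \rank (V' *m Sel F' f) = \rank V'.
  by rewrite Sel_tr mxrank_tr (eqP (maxrowsub_free _)) mxrank_tr.
have capV' : \rank (V' :&: kermx (Sel F' f)) = 0%N.
  move: (mxrank_mul_ker V' (Sel F' f)); rewrite rVS => /eqP.
  by rewrite -{2}[\rank V']addn0 eqn_add2l => /eqP.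
pose E' := [set ij in E | mxtens_index ij \notin codom f].
have notE' ij : ij \notin E' -> (ij \notin E) \/ (mxtens_index ij \in codom f).
  by rewrite inE negb_and negbK => /orP.
have corrT : corrects T E'.
  apply/corrects_iff => x xT /suppZ xZ.
  apply: sub_rank0 capV' _; rewrite !sub_capmx xT /= !sub_kermx.
  apply/andP; split.
    apply/eqP/suppZ => ij ijE; apply: xZ; rewrite inE negb_and ijE //.
  apply/eqP/matrixP => i l; rewrite ord1 SelE mxE.
  rewrite -(mxtens_unindexK (f l)) xZ // inE negb_and mxtens_unindexK.
  by rewrite codom_f orbT.
have topT : in_topology a b 0 T.
  exists Gc, Gr; split => //; exists r, Hl, (0 : 'M[F']_(0, N)); split => //.
  apply: eqmx_rows => x; rewrite pc_colP thinmx0 eqxx andbT -pc_codeP.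
  by rewrite (eqmxP e1).
have corrO : corrects Cout E' := MR E' (ex_intro _ F' (ex_intro _ T (conj topT corrT))).
set V := (Cout :&: kermx (Zmx F E))%MS.
rewrite -(mxrank_mul_ker V (Sel F f)).
have -> : \rank (V :&: kermx (Sel F f)) = 0%N.
  apply: rank0_of => x; rewrite !sub_capmx !sub_kermx.
  case/andP => /andP[xC /eqP /suppZ xZ] /eqP xS.
  apply: (proj1 (corrects_iff Cout E') corrO x xC).
  apply/suppZ => ij /notE' [ijE | /codomP [l ->]]; first exact: xZ.
  by rewrite -SelE xS mxE.
rewrite addn0; apply: leq_trans (rank_leq_col _) _.
by rewrite mxrank_tr.
Qed.

End Supp.

Lemma tens11 (K : fieldType) p r :
  (1%:M : 'M[K]_p) *t (1%:M : 'M[K]_r) = 1%:M.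
Proof.
apply/matrixP => i j.
case: (mxtens_indexP i) => i1 i2; case: (mxtens_indexP j) => j1 j2.
rewrite tensmxE !mxE (inj_eq (can_inj (@mxtens_indexK _ _))) xpair_eqE.
by case: (i1 == j1); case: (i2 == j2); rewrite ?mulr1n ?mulr0n ?mulr1 ?mulr0.
Qed.

Lemma tens_rank (K : fieldType) p r (A : 'M[K]_p) (B : 'M[K]_r) :
  (\rank A * \rank B <= \rank (A *t B))%N.
Proof.
have /row_freeP [PA HA] := row_base_free A.
have /row_freeP [PB HB] := row_base_free B.
have fr : row_free (row_base A *t row_base B).
  apply/row_freeP; exists (PA *t PB).
  by rewrite tensmx_mul HA HB tens11.
rewrite -(eqP fr); apply: mxrankS.
have sA : (row_base A <= A)%MS by rewrite eq_row_base.
have sB : (row_base B <= B)%MS by rewrite eq_row_base.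
rewrite -(mulmxKpV sA) -(mulmxKpV sB) -tensmx_mul.
exact: submxMl.
Qed.

Section Construct.
Variables (F : finFieldType) (L : fieldType) (phi : {rmorphism F -> L}).
Hypothesis frobD : forall x y : L, (x + y) ^+ #|F| = x ^+ #|F| + y ^+ #|F|.
Variables (m n a b h : nat).
Local Notation N := (m * n)%N.
Local Notation "A ^f" := (map_mx phi A) : ring_scope.
Variables (Cout : 'M[F]_N) (alpha : 'I_(\rank Cout) -> L).
Hypotheses (MR : is_MR a b 0 Cout) (ind : Findep phi alpha)
  (hk : (h <= \rank Cout)%N).

Lemma mapZ (E : {set 'I_m * 'I_n}) : (Zmx F E)^f = Zmx L E.
Proof.
by apply/matrixP => i j; rewrite !mxE; case: ifP; rewrite ?rmorph1 ?rmorph0.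
Qed.

Lemma construct : exists C : 'M[L]_N, \rank C = (\rank Cout - h)%N /\ is_MR a b h C.
Proof.
have [[Gc [Gr [ra rb [r [Hl [Hg [e1 e2]]]]]]] MR'] := MR.
have eC : (Cout :=: pc_code Hl)%MS.
  apply/eqmxP/eqmx_rows => x.
  by rewrite (eqmxP e2) pc_colP thinmx0 eqxx andbT -pc_codeP.
set G := row_base Cout.
have /row_freeP [R0 GR] := row_base_free Cout.
set M := moore F h alpha.
set Hgl := (R0^f *m M^T)^T.
set C := pc_code (col_mx Hl^f Hgl).
have eG : (G^f :=: (pc_code Hl)^f)%MS.
  by apply/map_eqmx; apply: eqmx_trans (eq_row_base _) eC.
have GRf (u : 'rV[L]_(\rank Cout)) : u *m G^f *m R0^f = u.
  by rewrite -mulmxA -map_mxM GR map_mx1 mulmx1.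
have memC (x : 'rV[L]_N) :
    (x <= C)%MS = (x <= G^f)%MS && (x *m R0^f *m M^T == 0).
  rewrite pc_colP trmxK mulmxA; congr (_ && _).
  by rewrite eG -pc_codeP /pc_code map_kermx map_trmx.
exists C; split.
  have eqC : (C :=: kermx M^T *m G^f)%MS.
    apply/eqmxP/eqmx_rows => x; rewrite memC.
    apply/andP/idP => [[/submxP [u ->] /eqP H] | /submxP [w ->]].
      rewrite GRf in H; move/sub_kermxP: H => /submxP [w ->].
      by rewrite -mulmxA submxMl.
    split; first by rewrite mulmxA submxMl.
    apply/eqP; rewrite mulmxA.
    by rewrite GRf -mulmxA mulmx_ker mulmx0.
  rewrite eqC mxrankMfree ?row_free_map ?row_base_free //.
  by rewrite mxrank_ker mxrank_tr (eqP (moore_free frobD hk ind)).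
split.
  exists Gc^f, Gr^f; split; rewrite ?mxrank_map //.
  exists r, Hl^f, Hgl; split; last by rewrite /C !submx_refl.
  rewrite /tens_code -map_mxT /pc_code map_trmx -map_kermx.
  by rewrite !map_submx.
move=> E corrE; have rk := keyB MR corrE.
apply/corrects_iff => x xC xZ.
set W := (Cout :&: kermx (Zmx F E))%MS.
set t := \rank W in rk.
set V := row_base W.
have xV : (x <= V^f)%MS.
  have e1' : (V^f :=: W^f)%MS by apply/map_eqmx; exact: eq_row_base.
  rewrite e1' map_capmx sub_capmx map_kermx mapZ sub_kermx xZ eqxx andbT.
  have eGC : (G^f :=: Cout^f)%MS by apply/map_eqmx; exact: eq_row_base.
  by rewrite -eGC; move: xC; rewrite memC => /andP[].
case/submxP: xV => lam xe.
have VG : (V <= G)%MS by rewrite !eq_row_base capmxSl.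
set Y := V *m pinvmx G.
have eVY : V = Y *m G by rewrite /Y mulmxKpV.
move: xC; rewrite memC => /andP [_ /eqP].
rewrite xe eVY map_mxM mulmxA GRf -mulmxA.
pose beta (l : 'I_t) := \sum_j phi (Y l j) * alpha j.
have eM : Y^f *m M^T = (moore F h beta)^T.
  apply/matrixP => l i; rewrite !mxE /beta frob_lin //.
  by apply: eq_bigr => j _; rewrite !mxE.
have Yfree : row_free Y.
  rewrite /row_free eqn_leq rank_leq_row /=.
  have := row_base_free W; rewrite /row_free => /eqP {1}<-.
  by rewrite -/V eVY mxrankM_maxl.
have indb : Findep phi beta.
  move=> d Hd.
  have H2 : forall j, \sum_l d l * Y l j = 0.
    apply: ind; apply: (etrans _ Hd).
    rewrite (eq_bigr (fun j => \sum_l phi (d l * Y l j) * alpha j)); last first.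
      by move=> j _; rewrite rmorph_sum mulr_suml.
    rewrite exchange_big /=; apply: eq_bigr => l _.
    by rewrite mulr_sumr; apply: eq_bigr => j _; rewrite rmorphM mulrA.
  have : (\row_l d l) *m Y = 0.
    by apply/matrixP => i j; rewrite !mxE; apply: (etrans _ (H2 j)); apply: eq_bigr => l _; rewrite mxE.
  move/eqP; rewrite mulmx_free_eq0 // => /eqP/matrixP H l.
  by have := H 0 l; rewrite !mxE.
rewrite eM => /eqP; rewrite mulmx_free_eq0; last exact: (moore_tfree frobD rk indb).
by move/eqP ->; rewrite !mul0mx.
Qed.

End Construct.

Theorem corollary2 (F : finFieldType) (q m n a b h k : nat) :
  #|F| = q ->
  (a < m)%N -> (b < n)%N ->
  (h <= (m - a) * (n - b) - maxn (m - a) (n - b))%N ->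
  forall Cout : 'M[F]_(m * n),
    \rank Cout = k ->
    is_MR a b 0 Cout ->
    exists (L : finFieldType) (C : 'M[L]_(m * n)),
      [/\ #|L| = (q ^ k)%N, \rank C = (k - h)%N & is_MR a b h C].
Proof.
move=> cardF ha hb hh Cout rk MR; subst q k.
have [Gc [Gr [ra rb eT]]] := topo0 (proj1 MR).
have kge : ((m - a) * (n - b) <= \rank Cout)%N.
  rewrite eT; apply: leq_trans (tens_rank _ _); exact: leq_mul.
have hk : (h <= \rank Cout)%N.
  by apply: leq_trans kge; apply: leq_trans hh (leq_subr _ _).
have k_gt0 : (0 < \rank Cout)%N.
  by apply: leq_trans kge; rewrite muln_gt0 !subn_gt0 ha hb.
have [L [phi [alpha [cardL ind frob]]]] := ext_field2 F k_gt0.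
have [C [rC mrC]] := construct frob MR ind hk.
by exists L, C; split.
Qed.
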